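(* If $H\in\mathcal{H}'$ and $H\notin\{K_4,W_5,M_7,J_7\}$, then $|V(H)|\ge 8$.
   Context: $M_7$ (Moser spindle): vertices $v_1,\dots,v_5,w_1,w_2$, with 5-cycle $v_1\cdots v_5$, $w_1$ adjacent to $v_1,v_2,v_3$ and $w_2$ adjacent to $v_1,v_4,v_5$. A near-bipartite coloring of a graph is a partition of its vertices into $I,F$ with $I$ independent and $G[F]$ a forest; a graph is nb-critical if it has none but every proper subgraph has one. Base graphs: $K_4$; the wheel $W_5$ (5-cycle plus a vertex adjacent to all its vertices); $J_7$, with vertices $w_1,\dots,w_4,v_1,v_2,v_3$ and edges $w_1v_1,w_1v_3,w_1w_4,w_2v_1,w_2v_2,w_2w_4,w_3v_2,w_3v_3,w_3w_4,v_1v_2,v_1v_3,v_2v_3$; and $J_{12}$, with vertices $a,b,p_1,\dots,p_4,q_1,\dots,q_6$ and edges $ab,p_1p_2,p_3p_4,ap_1,ap_2,bp_3,bp_4,q_1p_1,q_1p_2,q_2p_1,q_2p_2,q_3p_3,q_3p_4,q_4p_3,q_4p_4,q_5q_1,q_5q_3,q_6q_2,q_6q_4,q_5q_6$. The family $\mathcal{H}'$ is defined recursively: $s,t$ are specially-linked in $J$ if there exist $H\in\mathcal{H}'$ and $vw\in E(H)$ such that $J$ contains a subgraph isomorphic to $H-vw$ with $v\mapsto s,w\mapsto t$. $H\in\mathcal{H}'$ iff $H$ is a base graph, or $H$ is nb-critical with an induced cycle $C=x_1\cdots x_k$, $k\in\{3,5\}$, all $x_i$ of degree 3 in $H$, such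 that with $N(x_j)=\{x_{j-1},x_{j+1},z_j\}$ (indices mod $k$), whenever $z_j\ne z_{j+1}$ the vertices $z_j,z_{j+1}$ are specially-linked in $H-V(C)$. *)

(* Defs.v *)
(* Simple graphs are given by a vertex finType V and an
   adjacency relation e : rel V (symmetric and irreflexive). *)
From mathcomp Require Import all_boot.
Set Implicit Arguments.
Unset Strict Implicit.
Unset Printing Implicit Defensive.

Definition edges_rel (n : nat) (l : seq (nat * nat)) : rel 'I_n :=
  fun i j => ((val i, val j) \in l) || ((val j, val i) \in l).

Definition K4 : rel 'I_4 :=
  edges_rel [:: (0,1); (0,2); (0,3); (1,2); (1,3); (2,3)]%N.

(* W5: 5-cycle 0..4, hub 5 *)
Definition W5 : rel 'I_6 :=
  edges_rel [:: (0,1); (1,2); (2,3); (3,4); (4,0);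
                  (5,0); (5,1); (5,2); (5,3); (5,4)]%N.

(* Moser spindle: v1..v5 = 0..4, w1 = 5, w2 = 6 *)
Definition M7 : rel 'I_7 :=
  edges_rel [:: (0,1); (1,2); (2,3); (3,4); (4,0);
                  (5,0); (5,1); (5,2); (6,0); (6,3); (6,4)]%N.

(* J7: w1..w4 = 0..3, v1..v3 = 4..6 *)
Definition J7 : rel 'I_7 :=
  edges_rel [:: (0,4); (0,6); (0,3); (1,4); (1,5); (1,3);
                  (2,5); (2,6); (2,3); (4,5); (4,6); (5,6)]%N.

(* J12: a = 0, b = 1, p1..p4 = 2..5, q1..q6 = 6..11 *)
Definition J12 : rel 'I_12 :=
  edges_rel [:: (0,1); (2,3); (4,5); (0,2); (0,3); (1,4); (1,5);
                   (6,2); (6,3); (7,2); (7,3); (8,4); (8,5); (9,4); (9,5);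
                   (10,6); (10,8); (11,7); (11,9); (10,11)]%N.

Definition giso (V1 V2 : finType) (e1 : rel V1) (e2 : rel V2) : Prop :=
  exists f : V1 -> V2, bijective f /\ forall x y, e2 (f x) (f y) = e1 x y.

Definition is_base_graph (V : finType) (e : rel V) : Prop :=
  giso K4 e \/ giso W5 e \/ giso J7 e \/ giso J12 e.

Definition has_cycle_in (V : finType) (e : rel V) (F : {set V}) : Prop :=
  exists s : seq V, [/\ (3 <= size s)%N, uniq s, all (fun x => x \in F) s
                      & cycle e s].

(* near-bipartite coloring of the graph with vertex set U and edge relation e
   (e is assumed to only relate vertices of U) *)
Definition nb_colorable_on (V : finType) (U : {set V}) (e : rel V) : Prop :=
  exists I : {set V}, [/\ I \subset U,
                          (forall x y, x \in I -> y \in I -> ~~ e x y)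
                        & ~ has_cycle_in e (U :\: I)].

Definition nb_colorable (V : finType) (e : rel V) : Prop :=
  nb_colorable_on [set: V] e.

Definition proper_subgraph (V : finType) (e : rel V) (U : {set V}) (e' : rel V)
  : Prop :=
  [/\ symmetric e',
      (forall x y, e' x y -> [&& x \in U, y \in U & e x y])
    & (U != [set: V]) \/
      (exists x y, [&& x \in U, y \in U, e x y & ~~ e' x y])].

Definition nb_critical (V : finType) (e : rel V) : Prop :=
  ~ nb_colorable e /\
  forall (U : {set V}) (e' : rel V), proper_subgraph e U e' -> nb_colorable_on U e'.

(* The clause "z_j, z_{j+1} specially-linked in H - V(C)" is
   unfolded: there are W, eW in H', an edge v w of eW, and an injective map
   f from W into the vertices of H outside V(C) with f v = s, f w = t,
   mapping every edge of eW other than vw to an edge of H. *)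
Inductive Hprime : forall V : finType, rel V -> Prop :=
| Hprime_base (V : finType) (e : rel V) : is_base_graph e -> Hprime e
| Hprime_rec (V : finType) (e : rel V) :
    symmetric e -> irreflexive e -> nb_critical e ->
    (exists (k : nat) (x : nat -> V),
       [/\ k = 3 \/ k = 5,
           (forall i j, (i < k)%N -> (j < k)%N -> x i = x j -> i = j),
           (forall i j, (i < k)%N -> (j < k)%N ->
              e (x i) (x j) = (j == (i.+1 %% k)%N) || (i == (j.+1 %% k)%N)),
           (forall i, (i < k)%N -> #|[set y | e (x i) y]| = 3)
         &
           forall j zj zj1, (j < k)%N ->
             e (x j) zj -> (forall i, (i < k)%N -> zj != x i) ->
             e (x (j.+1 %% k)%N) zj1 -> (forall i, (i < k)%N -> zj1 != x i) ->
             zj != zj1 ->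
             exists (W : finType) (eW : rel W) (v w : W) (f : W -> V),
               [/\ Hprime eW, eW v w, injective f, f v = zj /\ f w = zj1
                 & (forall a i, (i < k)%N -> f a != x i) /\ forall a b, eW a b -> ~ ((a == v) && (b == w) || (a == w) && (b == v)) ->
                     e (f a) (f b)]]) ->
    Hprime e.

(* Main.v *)
Require Import Defs.
From mathcomp Require Import all_boot.
Set Implicit Arguments. Unset Strict Implicit. Unset Printing Implicit Defensive.

Lemma K4_compl (i j : 'I_4) : i != j -> K4 i j.
Proof.
case: i => [[|[|[|[|i]]]] Hi] //; case: j => [[|[|[|[|j]]]] Hj] //.
Qed.

Lemma uniq_card (V : finType) (s : seq V) : uniq s -> size s <= #|V|.
Proof. by move/card_uniqP <-; apply: max_card. Qed.

Lemma giso_card n (E : rel 'I_n) (V : finType) (e : rel V) : giso E e -> #|V| = n.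
Proof. by case=> f [/bij_eq_card <- _]; rewrite card_ord. Qed.

Lemma no_cycle_small (V : finType) (e : rel V) (I : {set V}) (t : seq V) :
  uniq t -> (forall x, x \in t -> x \in I) -> #|V| <= size t + 2 ->
  ~ has_cycle_in e (setT :\: I).
Proof.
move=> ut tI hV [s [s3 us /allP sF _]].
have : uniq (t ++ s).
  rewrite cat_uniq ut us andbT /=; apply/hasPn => x xs; apply/negP => xt.
  by move: (sF x xs); rewrite !inE (tI x xt).
move/uniq_card; rewrite size_cat => H.
have : size t + 3 <= size t + 2.
  by apply: leq_trans hV; apply: leq_trans H; rewrite leq_add2l.
by rewrite leq_add2l.
Qed.

Lemma Hprime_card (W : finType) (eW : rel W) : Hprime eW ->
  4 <= #|W| /\ (#|W| <= 4 -> forall a b, a != b -> eW a b).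
Proof.
case=> {W eW} W eW.
- case=> [|[|[]]] /[dup] Hg /giso_card -> //; split=> // _ a b ab.
  case: Hg => f [[g gf fg] Hf].
  rewrite -[a](fg) -[b](fg) Hf; apply: K4_compl.
  by apply: contraNneq ab => /(congr1 f); rewrite !fg => ->.
- move=> sym irr [ncol _] _.
  have H1 : 4 <= #|W|.
    rewrite leqNgt; apply/negP => H3; apply: ncol.
    have [u _|n0] := pickP (fun _ : W => true).
    + exists [set u]; split => //.
      * by move=> x y; rewrite !inE => /eqP -> /eqP ->; rewrite irr.
      * by apply: (@no_cycle_small _ _ _ [:: u]) => // x; rewrite !inE.
    + exists set0; split; [exact: subsetT | by move=> x y; rewrite inE | ].
      apply: (@no_cycle_small _ _ _ [::]) => //=.
      by rewrite eq_card0.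
  split=> // H4 a b ab; apply/negPn/negP => nab; apply: ncol.
  exists [set a; b]; split => //.
  + by move=> x y; rewrite !inE => /orP[] /eqP -> /orP[] /eqP ->;
       rewrite ?irr // sym.
  + apply: (@no_cycle_small _ _ _ [:: a; b]) => //=.
    * by rewrite inE ab.
    * by move=> x; rewrite !inE.
Qed.

Lemma neq_symF (T : eqType) (a b : T) : a != b -> (b == a) = false.
Proof. by rewrite eq_sym => /negbTE. Qed.

Ltac neqs := repeat match goal with
 | H : is_true (_ && _) |- _ => case/andP: H => ? ?
 | H : is_true (~~ (_ || _)) |- _ => rewrite negb_or in H
 | H : is_true (?a != ?b) |- _ =>
     have ?: (a == b) = false := negbTE H;
     have ?: (b == a) = false := neq_symF H; clear H
 end.

Ltac simp_eq := repeat match goal with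
  | H : (?a == ?b) = false |- context[?a == ?b] => rewrite H
  end.

Definition restr (V : finType) (e : rel V) (U : {set V}) : rel V :=
  fun a b => [&& a \in U, b \in U & e a b].

Lemma crit_sub (V : finType) (e : rel V) (U : {set V}) :
  nb_critical e -> symmetric e -> U != setT -> nb_colorable_on U (restr e U).
Proof.
move=> [_ H] sym UT; apply: H; split.
- by move=> a b; rewrite /restr andbCA sym.
- by move=> a b /and3P[-> -> ->].
- by left.
Qed.

Lemma tri_cyc (V : finType) (e : rel V) (U I : {set V}) p q r :
  p \in U -> q \in U -> r \in U -> p \notin I -> q \notin I -> r \notin I ->
  p != q -> q != r -> p != r -> e p q -> e q r -> e r p ->
  has_cycle_in (restr e U) (U :\: I).
Proof.
move=> pU qU rU pI qI rI pq qr pr epq eqr erp.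
exists [:: p; q; r]; split => //=.
- by rewrite !inE negb_or pq pr qr.
- by rewrite !inE pU qU rU pI qI rI.
- by rewrite /restr pU qU rU epq eqr erp.
Qed.

Lemma pent_cyc (V : finType) (e : rel V) (U I : {set V}) p q r s t :
  p \in U -> q \in U -> r \in U -> s \in U -> t \in U ->
  p \notin I -> q \notin I -> r \notin I -> s \notin I -> t \notin I ->
  uniq [:: p; q; r; s; t] ->
  e p q -> e q r -> e r s -> e s t -> e t p ->
  has_cycle_in (restr e U) (U :\: I).
Proof.
move=> pU qU rU sU tU pI qI rI sI tI u e1 e2 e3 e4 e5.
exists [:: p; q; r; s; t]; split => //=.
- by rewrite !inE pU qU rU sU tU pI qI rI sI tI.
- by rewrite /restr pU qU rU sU tU e1 e2 e3 e4 e5.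
Qed.

Lemma notI (V : finType) (e : rel V) (U I : {set V}) x y :
  (forall x y, x \in I -> y \in I -> ~~ restr e U x y) ->
  x \in U -> y \in U -> e x y -> y \in I -> x \notin I.
Proof.
move=> Hind xU yU exy yI; apply/negP => xI.
by move: (Hind x y xI yI); rewrite /restr xU yU exy.
Qed.

Lemma K4_sub (V : finType) (e : rel V) a b c d :
  nb_critical e -> symmetric e -> [set a; b; c; d] != setT ->
  uniq [:: a; b; c; d] ->
  e a b -> e a c -> e a d -> e b c -> e b d -> e c d -> False.
Proof.
move=> crit sym UT un eab eac ead ebc ebd ecd.
have [I [_ Hind Hc]] := crit_sub crit sym UT; apply: Hc.
set U := [set a; b; c; d] in Hind *.
have aU : a \in U by rewrite !inE eqxx ?orbT.
have bU : b \in U by rewrite !inE eqxx ?orbT.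
have cU : c \in U by rewrite !inE eqxx ?orbT.
have dU : d \in U by rewrite !inE eqxx ?orbT.
move: un => /=; rewrite !inE !negb_or => /andP[/and3P[ab ac ad] /andP[/andP[bc bd] /andP[cd _]]].
have N := notI Hind.
case aI: (a \in I).
  by apply: (@tri_cyc _ _ _ _ b c d) => //; first [apply: N aI => //; by rewrite sym | by rewrite sym ].
case bI: (b \in I).
  by apply: (@tri_cyc _ _ _ _ a c d) => //; rewrite ?aI //; first [apply: N bI => //; by rewrite sym | by rewrite sym ].
case cI: (c \in I).
  by apply: (@tri_cyc _ _ _ _ a b d) => //; rewrite ?aI ?bI //; first [apply: N cI => //; by rewrite sym | by rewrite sym ].
by apply: (@tri_cyc _ _ _ _ a b c) => //; rewrite ?aI ?bI ?cI //; by rewrite sym.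
Qed.

Lemma W5_sub (V : finType) (e : rel V) z a b c d f :
  nb_critical e -> symmetric e -> [set z; a; b; c; d; f] != setT ->
  uniq [:: z; a; b; c; d; f] ->
  e z a -> e z b -> e z c -> e z d -> e z f ->
  e a b -> e b c -> e c d -> e d f -> e f a -> False.
Proof.
move=> crit sym UT un eza ezb ezc ezd ezf eab ebc ecd edf efa.
have [I [_ Hind Hc]] := crit_sub crit sym UT; apply: Hc.
set U := [set z; a; b; c; d; f] in Hind *.
have zU : z \in U by rewrite !inE eqxx ?orbT.
have aU : a \in U by rewrite !inE eqxx ?orbT.
have bU : b \in U by rewrite !inE eqxx ?orbT.
have cU : c \in U by rewrite !inE eqxx ?orbT.
have dU : d \in U by rewrite !inE eqxx ?orbT.
have fU : f \in U by rewrite !inE eqxx ?orbT.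
have un' := un.
move: un => /=; rewrite !inE !negb_or => /andP[/and5P[za zb zc zd zf] /andP[/and4P[ab ac ad af] /andP[/and3P[bc bd bf] /andP[/andP[cd cf] /andP[df _]]]]].
have N := notI Hind.
case zI: (z \in I).
  apply: (@pent_cyc _ _ _ _ a b c d f) => //; first [apply: N zI => //; by rewrite sym | by move: un' => /= /andP[] ].
pose T := fun p q => @tri_cyc _ e U I z p q.
case aI: (a \in I).
  have bI : b \notin I by apply: N aI => //; rewrite sym.
  have fI : f \notin I by apply: N aI.
  case cI: (c \in I).
    have dI : d \notin I by apply: N cI => //; rewrite sym.
    by apply: (T d f) => //; rewrite ?zI // sym.
  by apply: (T b c) => //; rewrite ?zI ?cI // sym.
case bI: (b \in I).
  have cI : c \notin I by apply: N bI => //; rewrite sym.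
  case dI: (d \in I).
    have fI : f \notin I by apply: N dI => //; rewrite sym.
    by apply: (T f a) => //; rewrite ?zI ?aI //; first [by rewrite sym | by rewrite eq_sym].
  by apply: (T c d) => //; rewrite ?zI ?dI // sym.
by apply: (T a b) => //; rewrite ?zI ?aI ?bI // sym.
Qed.

Lemma seq_card_le (V : finType) (s : seq V) (A : {set V}) :
  uniq s -> (forall x, x \in s -> x \in A) -> size s <= #|A|.
Proof.
move=> us sA; rewrite -(card_uniqP us); apply: subset_leq_card.
by apply/subsetP.
Qed.

Lemma nbr3 (V : finType) (e : rel V) u p q :
  #|[set y | e u y]| = 3 -> e u p -> e u q -> p != q ->
  exists z, [/\ z != p, z != q, e u z & forall y, e u y = [|| y == p, y == q | y == z]].
Proof.
move=> H3 ep eq pq.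
have [z /andP[ez]] : exists z, e u z && (z \notin [:: p; q]).
  case: (pickP (fun z => e u z && (z \notin [:: p; q]))) => [z Hz|Hall]; first by exists z.
  have : #|[set y | e u y]| <= #|[:: p; q]|.
    apply: subset_leq_card; apply/subsetP => y; rewrite inE => ey.
    by move: (Hall y); rewrite ey /= => /negbT; rewrite negbK.
  by rewrite H3 => /leq_trans /(_ (card_size _)).
rewrite !inE negb_or => /andP[zp zq].
exists z; split => // y.
case ey: (e u y); last first.
  by apply/esym/negbTE; rewrite !negb_or; apply/and3P; split;
     apply/negP => /eqP Ey; move: ey; rewrite Ey ?ep ?eq ?ez.
apply/esym/negPn/negP; rewrite !negb_or => /and3P[yp yq yz].
have : size [:: p; q; z; y] <= #|[set y | e u y]|.
  apply: seq_card_le.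
  - clear -pq zp zq yp yq yz; neqs; rewrite /= !inE; simp_eq; done.
  - by move=> x; rewrite !inE => /or4P[] /eqP ->.
by rewrite H3.
Qed.


Lemma pick_other (V : finType) (s : seq V) : size s < #|V| -> exists c, c \notin s.
Proof.
move=> H.
case: (pickP (fun c => c \notin s)) => [c Hc|Hall]; first by exists c.
have : #|V| <= size s.
  apply: leq_trans (card_size s); apply: subset_leq_card; apply/subsetP => y _.
  by move: (Hall y) => /negbT; rewrite negbK.
by rewrite leqNgt H.
Qed.

Lemma link_K4 (V : finType) (e : rel V) (P Q R s t : V) (W : finType) (eW : rel W) v w
  (f : W -> V) :
  #|V| <= 7 -> uniq [:: P; Q; R] -> Hprime eW -> injective f -> f v = s -> f w = t ->
  s != t -> (forall a, f a \notin [:: P; Q; R]) ->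
  (forall a b, eW a b -> ~ ((a == v) && (b == w) || (a == w) && (b == v)) -> e (f a) (f b)) ->
  exists A B, [/\ uniq [:: P; Q; R; s; t; A; B], (forall y, y \in [:: P; Q; R; s; t; A; B]) &
    [/\ e s A, e s B, e t A, e t B & e A B]].
Proof.
move=> V7 uPQR HW finj fv fw st fav Hl.
have [H4 Hc] := Hprime_card HW.
have vw : v != w by apply: contraNneq st => vw; rewrite -fv -fw vw.
have Hu : forall l, uniq l -> uniq ([:: P; Q; R] ++ map f l).
  move=> l ul; rewrite cat_uniq uPQR (map_inj_uniq finj) ul andbT /=.
  apply/hasPn => y /mapP [a _ ->]; exact: fav.
have [a' a'n] : exists a', a' \notin [:: v; w] by apply: pick_other; apply: leq_trans H4.
have [b' b'n] : exists b', b' \notin [:: v; w; a'] by apply: pick_other; apply: leq_trans H4.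
have U4 : uniq [:: v; w; a'; b'].
  move: a'n b'n; rewrite /= !inE !negb_or => H1 H2; clear -H1 H2 vw; neqs.
  by simp_eq.
have W4 : #|W| <= 4.
  rewrite leqNgt; apply/negP => W5.
  have [c' c'n] := @pick_other _ [:: v; w; a'; b'] W5.
  have : uniq ([:: P; Q; R] ++ map f [:: v; w; a'; b'; c']).
    apply: Hu; move: U4 c'n; rewrite /= !inE !negb_or => H1 H2; clear -H1 H2; neqs.
    by simp_eq.
  by move/uniq_card => /= H8; move: (leq_trans H8 V7).
have Hc4 := Hc W4.
have E : forall a b, a != b -> ~~ ((a == v) && (b == w) || (a == w) && (b == v)) -> e (f a) (f b).
  move=> a b ab nab; apply: Hl; first exact: Hc4.
  by apply/negP.
have U7 : uniq ([:: P; Q; R] ++ map f [:: v; w; a'; b']) by apply: Hu.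
exists (f a'), (f b'); split.
- by move: U7; rewrite /= fv fw.
- move=> y; apply/negPn/negP => yn.
  have : uniq (y :: [:: P; Q; R] ++ map f [:: v; w; a'; b']) by rewrite /= fv fw yn -fv -fw.
  by move/uniq_card => /= H8; move: (leq_trans H8 V7).
- move: U4; rewrite /= !inE !negb_or => /andP[/and3P[vw' va vb] /andP[/andP[wa wb] /andP[ab _]]].
  clear -E vw' va vb wa wb ab fv fw; neqs.
  split; rewrite -?fv -?fw; apply: E; simp_eq; rewrite ?eqxx //.
Qed.

Lemma mk_giso n (E : rel 'I_n) (V : finType) (e : rel V) (g : 'I_n -> V) :
  injective g -> #|V| <= n -> (forall a b, e (g a) (g b) = E a b) -> giso E e.
Proof.
move=> gi Vn H; exists g; split => //; apply: inj_card_bij => //.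
by rewrite card_ord.
Qed.

Lemma nth_inj (V : eqType) n (l : seq V) (d : V) :
  size l = n -> uniq l -> injective (fun i : 'I_n => nth d l i).
Proof.
move=> sz ul i j /eqP; rewrite nth_uniq ?sz // => /eqP H; exact: val_inj.
Qed.

Lemma M7_iso (V : finType) (e : rel V) (Z P1 Q1 Y A R1 B : V) :
  symmetric e -> irreflexive e -> #|V| <= 7 ->
  uniq [:: Z; P1; Q1; Y; A; R1; B] ->
  (forall y, e P1 y = [|| y == Z, y == Q1 | y == R1]) ->
  (forall y, e Q1 y = [|| y == P1, y == R1 | y == Y]) ->
  (forall y, e R1 y = [|| y == Z, y == P1 | y == Q1]) ->
  e Z A -> e Z B -> e Y A -> e Y B -> e A B -> ~~ e Z Y ->
  giso M7 e.
Proof.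
move=> sym irr V7 ul NP NQ NR eZA eZB eYA eYB eAB nZY.
apply: (@mk_giso 7 M7 V e (fun i => nth Z [:: Z; P1; Q1; Y; A; R1; B] i)) => //.
  exact: nth_inj.
have nZY' := negbTE nZY.
move: ul; rewrite /= !inE !negb_or => ul; neqs.
move=> [[|[|[|[|[|[|[|a]]]]]]] Ha] //; move=> [[|[|[|[|[|[|[|b]]]]]]] Hb] //;
  rewrite /M7 /edges_rel /=;
  first [ by rewrite irr
        | by rewrite NP ?eqxx; simp_eq
        | by rewrite NQ ?eqxx; simp_eq
        | by rewrite NR ?eqxx; simp_eq
        | by rewrite sym NP ?eqxx; simp_eq
        | by rewrite sym NQ ?eqxx; simp_eq
        | by rewrite sym NR ?eqxx; simp_eq
        | done
        | by rewrite sym ].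
Qed.

Lemma K4_iso (V : finType) (e : rel V) (a b c d : V) :
  symmetric e -> irreflexive e -> #|V| <= 4 -> uniq [:: a; b; c; d] ->
  e a b -> e a c -> e a d -> e b c -> e b d -> e c d -> giso K4 e.
Proof.
move=> sym irr V4 ul e1 e2 e3 e4 e5 e6.
apply: (@mk_giso 4 K4 V e (fun i => nth a [:: a; b; c; d] i)) => //.
  exact: nth_inj.
move=> [[|[|[|[|i]]]] Ha] //; move=> [[|[|[|[|j]]]] Hb] //;
  rewrite /K4 /edges_rel /=; first [by rewrite irr | done | by rewrite sym].
Qed.

Lemma W5_iso (V : finType) (e : rel V) (a b c d f z : V) :
  symmetric e -> irreflexive e -> #|V| <= 6 -> uniq [:: a; b; c; d; f; z] ->
  e z a -> e z b -> e z c -> e z d -> e z f ->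
  e a b -> e b c -> e c d -> e d f -> e f a ->
  ~~ e a c -> ~~ e a d -> ~~ e b d -> ~~ e b f -> ~~ e c f -> giso W5 e.
Proof.
move=> sym irr V6 ul e1 e2 e3 e4 e5 e6 e7 e8 e9 e10 n1 n2 n3 n4 n5.
apply: (@mk_giso 6 W5 V e (fun i => nth a [:: a; b; c; d; f; z] i)) => //.
  exact: nth_inj.
move: n1 n2 n3 n4 n5 => /negbTE n1 /negbTE n2 /negbTE n3 /negbTE n4 /negbTE n5.
move=> [[|[|[|[|[|[|i]]]]]] Ha] //; move=> [[|[|[|[|[|[|j]]]]]] Hb] //;
  rewrite /W5 /edges_rel /=; first [by rewrite irr | done | by rewrite sym].
Qed.

Definition linkP (V : finType) (e : rel V) (P Q R s t : V) :=
  exists (W : finType) (eW : rel W) (v w : W) (f : W -> V),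
    [/\ Hprime eW, injective f, f v = s /\ f w = t, (forall a, f a \notin [:: P; Q; R])
      & (forall a b, eW a b -> ~ ((a == v) && (b == w) || (a == w) && (b == v)) -> e (f a) (f b))].

Lemma use_link (V : finType) (e : rel V) (P Q R s t : V) :
  #|V| <= 7 -> uniq [:: P; Q; R] -> s != t -> linkP e P Q R s t ->
  exists A B, [/\ uniq [:: P; Q; R; s; t; A; B], (forall y, y \in [:: P; Q; R; s; t; A; B]) &
    [/\ e s A, e s B, e t A, e t B & e A B]].
Proof.
move=> V7 u st [W [eW [v [w [f [HW fi [fv fw] fa Hl]]]]]].
exact: (link_K4 V7 u HW fi fv fw st fa Hl).
Qed.

Lemma core3 (V : finType) (e : rel V) (P Q R zP zQ zR : V) :
  symmetric e -> irreflexive e -> nb_critical e -> #|V| <= 7 -> ~ giso M7 e ->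
  uniq [:: P; Q; R] ->
  (forall y, e P y = [|| y == Q, y == R | y == zP]) ->
  (forall y, e Q y = [|| y == R, y == P | y == zQ]) ->
  (forall y, e R y = [|| y == P, y == Q | y == zR]) ->
  zP \notin [:: P; Q; R] -> zQ \notin [:: P; Q; R] -> zR \notin [:: P; Q; R] ->
  zP != zQ -> linkP e P Q R zP zQ -> (zQ != zR -> linkP e P Q R zQ zR) -> False.
Proof.
move=> sym irr crit V7 nM7 uPQR NP NQ NR zPn zQn zRn PQ L1 L2.
have [A [B [U7 all7 [ePA ePB eQA eQB eAB]]]] := use_link V7 uPQR PQ L1.
have U7' := U7.
move: U7' zRn; rewrite /= !inE !negb_or => U7' zRn; neqs.
case ePQ: (e zP zQ).
  apply: (@K4_sub V e zP zQ A B) => //.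
  - apply/negP => /eqP H.
    have : P \in [set zP; zQ; A; B] by rewrite H inE.
    by rewrite !inE; simp_eq.
  - by rewrite /= !inE; simp_eq.
move: (all7 zR); rewrite !inE; simp_eq; rewrite /=.
case/or4P => /eqP E.
- apply: nM7; apply: (@M7_iso V e zP P Q zQ A R B) => //.
  + by rewrite /= !inE; simp_eq.
  + by move=> y; rewrite NP; case: (y == Q); case: (y == R); case: (y == zP).
  + by move=> y; rewrite NQ; case: (y == R); case: (y == P); case: (y == zQ).
  + by move=> y; rewrite NR E; case: (y == P); case: (y == Q); case: (y == zP).
  + by rewrite ePQ.
- apply: nM7; apply: (@M7_iso V e zQ Q P zP A R B) => //.
  + by rewrite /= !inE; simp_eq.
  + by move=> y; rewrite NQ; case: (y == R); case: (y == P); case: (y == zQ).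
  + by move=> y; rewrite NR E; case: (y == P); case: (y == Q); case: (y == zQ).
  + by rewrite sym ePQ.
- have QR : zQ != zR by rewrite E; apply/negbT; simp_eq.
  have [A' [B' [U7b all7b [eQA' eQB' _ _ _]]]] := use_link V7 uPQR QR (L2 QR).
  move: (all7b zP); rewrite !inE E; simp_eq; rewrite /=.
  move: U7b; rewrite /= !inE E; simp_eq; rewrite /= !negb_or => U7b.
  by case/orP => /eqP E'; move: ePQ; rewrite sym E' ?eQA' ?eQB'.
- have QR : zQ != zR by rewrite E; apply/negbT; simp_eq.
  have [A' [B' [U7b all7b [eQA' eQB' _ _ _]]]] := use_link V7 uPQR QR (L2 QR).
  move: (all7b zP); rewrite !inE E; simp_eq; rewrite /=.
  by case/orP => /eqP E'; move: ePQ; rewrite sym E' ?eQA' ?eQB'.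
Qed.

Definition link_out (V : finType) (e : rel V) (k : nat) (x : nat -> V) (zj zj1 : V) :=
  exists (W : finType) (eW : rel W) (v w : W) (f : W -> V),
               [/\ Hprime eW, eW v w, injective f, f v = zj /\ f w = zj1
                 & (forall a i, (i < k)%N -> f a != x i) /\ forall a b, eW a b -> ~ ((a == v) && (b == w) || (a == w) && (b == v)) ->
                     e (f a) (f b)].

Lemma link_of (V : finType) (e : rel V) (x : nat -> V) s t P Q R :
  (forall y, (y \in [:: P; Q; R]) = (y \in [:: x 0; x 1; x 2])) ->
  link_out e 3 x s t -> linkP e P Q R s t.
Proof.
move=> HPQR [W [eW [v [w [f [HW _ fi fvw [fa Hl]]]]]]].
exists W, eW, v, w, f; split => // a.
rewrite HPQR !inE !negb_or.
by rewrite (fa a 0 isT) (fa a 1 isT) (fa a 2 isT).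
Qed.

Lemma card_le_all (V : finType) (s : seq V) : (forall y, y \in s) -> #|V| <= size s.
Proof.
move=> H; apply: leq_trans (card_size s); apply: subset_leq_card; apply/subsetP => y _.
exact: H.
Qed.

Lemma set_neqT (V : finType) (s : seq V) y : y \notin s -> [set z in s] != setT.
Proof.
move=> yn; apply/negP => /eqP H; move: (in_setT y); rewrite -H inE.
by rewrite (negbTE yn).
Qed.

Lemma case3 (V : finType) (e : rel V) (x : nat -> V) :
  symmetric e -> irreflexive e -> nb_critical e -> #|V| <= 7 -> ~ giso K4 e -> ~ giso M7 e ->
  (forall i j, (i < 3)%N -> (j < 3)%N -> x i = x j -> i = j) ->
  (forall i j, (i < 3)%N -> (j < 3)%N ->
              e (x i) (x j) = (j == (i.+1 %% 3)%N) || (i == (j.+1 %% 3)%N)) ->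
  (forall i, (i < 3)%N -> #|[set y | e (x i) y]| = 3) ->
  (forall j zj zj1, (j < 3)%N ->
             e (x j) zj -> (forall i, (i < 3)%N -> zj != x i) ->
             e (x (j.+1 %% 3)%N) zj1 -> (forall i, (i < 3)%N -> zj1 != x i) ->
             zj != zj1 -> link_out e 3 x zj zj1) -> False.
Proof.
move=> sym irr crit V7 nK4 nM7 Hinj Hind Hdeg Hlink.
have d01 : x 0 != x 1 by apply/eqP => /(Hinj 0 1 isT isT).
have d02 : x 0 != x 2 by apply/eqP => /(Hinj 0 2 isT isT).
have d12 : x 1 != x 2 by apply/eqP => /(Hinj 1 2 isT isT).
have e01 : e (x 0) (x 1) by rewrite Hind.
have e12 : e (x 1) (x 2) by rewrite Hind.
have e02 : e (x 0) (x 2) by rewrite Hind.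
have e10 : e (x 1) (x 0) by rewrite Hind.
have e20 : e (x 2) (x 0) by rewrite Hind.
have e21 : e (x 2) (x 1) by rewrite Hind.
have [z0 [z0a z0b ez0 N0]] := nbr3 (Hdeg 0 isT) e01 e02 d12.
have d20 : x 2 != x 0 by rewrite eq_sym.
have [z1 [z1a z1b ez1 N1]] := nbr3 (Hdeg 1 isT) e12 e10 d20.
have [z2 [z2a z2b ez2 N2]] := nbr3 (Hdeg 2 isT) e20 e21 d01.
have z0c : z0 != x 0 by apply: contraTneq ez0 => ->; rewrite irr.
have z1c : z1 != x 1 by apply: contraTneq ez1 => ->; rewrite irr.
have z2c : z2 != x 2 by apply: contraTneq ez2 => ->; rewrite irr.
have z0C : forall i, (i < 3)%N -> z0 != x i by case=> [|[|[|]]].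
have z1C : forall i, (i < 3)%N -> z1 != x i by case=> [|[|[|]]].
have z2C : forall i, (i < 3)%N -> z2 != x i by case=> [|[|[|]]].
have z0n : z0 \notin [:: x 0; x 1; x 2] by rewrite !inE !negb_or z0c z0a z0b.
have z1n : z1 \notin [:: x 0; x 1; x 2] by rewrite !inE !negb_or z1c z1a z1b.
have z2n : z2 \notin [:: x 0; x 1; x 2] by rewrite !inE !negb_or z2c z2a z2b.
have ux : uniq [:: x 0; x 1; x 2] by rewrite /= !inE !negb_or d01 d02 d12.
have perm : forall y, (y \in [:: x 1; x 2; x 0]) = (y \in [:: x 0; x 1; x 2]).
  by move=> y; rewrite !inE; case: (y == x 0); case: (y == x 1); case: (y == x 2).
have HL : forall j zj zj1, (j < 3)%N ->
             e (x j) zj -> (forall i, (i < 3)%N -> zj != x i) ->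
             e (x (j.+1 %% 3)%N) zj1 -> (forall i, (i < 3)%N -> zj1 != x i) ->
             zj != zj1 -> linkP e (x 0) (x 1) (x 2) zj zj1.
  move=> j zj zj1 H1 H2 H3 H4 H5 H6; apply: (@link_of _ _ x); first by [].
  exact: (Hlink j zj zj1 H1 H2 H3 H4 H5 H6).
have HL' : forall j zj zj1, (j < 3)%N ->
             e (x j) zj -> (forall i, (i < 3)%N -> zj != x i) ->
             e (x (j.+1 %% 3)%N) zj1 -> (forall i, (i < 3)%N -> zj1 != x i) ->
             zj != zj1 -> linkP e (x 1) (x 2) (x 0) zj zj1.
  move=> j zj zj1 H1 H2 H3 H4 H5 H6; apply: (@link_of _ _ x); first exact: perm.
  exact: (Hlink j zj zj1 H1 H2 H3 H4 H5 H6).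
have [z01|/negPn/eqP z01] := boolP (z0 != z1).
  exact: (core3 sym irr crit V7 nM7 ux N0 N1 N2 z0n z1n z2n z01
            (HL 0 z0 z1 isT ez0 z0C ez1 z1C z01) (HL 1 z1 z2 isT ez1 z1C ez2 z2C)).
have [z12|/negPn/eqP z12] := boolP (z1 != z2).
  have ux' : uniq [:: x 1; x 2; x 0] by rewrite /= !inE !negb_or d12 eq_sym d01 d20.
  have pn : forall z, z \notin [:: x 0; x 1; x 2] -> z \notin [:: x 1; x 2; x 0].
    by move=> z; rewrite perm.
  exact: (core3 sym irr crit V7 nM7 ux' N1 N2 N0 (pn _ z1n) (pn _ z2n) (pn _ z0n) z12
            (HL' 1 z1 z2 isT ez1 z1C ez2 z2C z12) (HL' 2 z2 z0 isT ez2 z2C ez0 z0C)).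
subst z1 z2.
have ez1' : e z0 (x 1) by rewrite sym.
have ez2' : e z0 (x 2) by rewrite sym.
have ez0' : e z0 (x 0) by rewrite sym.
have u4 : uniq [:: x 0; x 1; x 2; z0].
  by rewrite /= !inE !negb_or d01 d02 d12 eq_sym z0c eq_sym z1c eq_sym z2c.
case: (pickP (fun y => y \notin [:: x 0; x 1; x 2; z0])) => [y yn | Hall].
  apply: (@K4_sub V e (x 0) (x 1) (x 2) z0) => //; rewrite 1?sym //.
  apply/negP => /eqP H; move: (in_setT y); rewrite -H !inE.
  rewrite -!orbA; by move: yn; rewrite !inE => /negbTE ->.
apply: nK4; apply: (@K4_iso V e (x 0) (x 1) (x 2) z0) => //; rewrite 1?sym //.
apply: (@card_le_all _ [:: x 0; x 1; x 2; z0]) => y.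
by move: (Hall y) => /negbT; rewrite negbK.
Qed.


Lemma link_big (V : finType) (e : rel V) (x : nat -> V) s t :
  #|V| <= 8 -> uniq [:: x 0; x 1; x 2; x 3; x 4] -> s != t -> link_out e 5 x s t -> False.
Proof.
move=> V8 ux st [W [eW [v [w [f [HW _ finj [fv fw] [fa _]]]]]]].
have [H4 _] := Hprime_card HW.
have vw : v != w by apply: contraNneq st => vw; rewrite -fv -fw vw.
have [a' a'n] : exists a', a' \notin [:: v; w] by apply: pick_other; apply: leq_trans H4.
have [b' b'n] : exists b', b' \notin [:: v; w; a'] by apply: pick_other; apply: leq_trans H4.
have U4 : uniq [:: v; w; a'; b'].
  move: a'n b'n; rewrite /= !inE !negb_or => H1 H2; clear -H1 H2 vw; neqs.
  by simp_eq.
have : uniq ([:: x 0; x 1; x 2; x 3; x 4] ++ map f [:: v; w; a'; b']).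
  rewrite cat_uniq ux (map_inj_uniq finj) U4 andbT.
  apply/hasPn => y /mapP [a _ ->]; rewrite !inE !negb_or.
  by rewrite (fa a 0 isT) (fa a 1 isT) (fa a 2 isT) (fa a 3 isT) (fa a 4 isT).
by move/uniq_card => /= H9; move: (leq_trans H9 V8).
Qed.

Lemma case5 (V : finType) (e : rel V) (x : nat -> V) :
  symmetric e -> irreflexive e -> nb_critical e -> #|V| <= 7 -> ~ giso W5 e ->
  (forall i j, (i < 5)%N -> (j < 5)%N -> x i = x j -> i = j) ->
  (forall i j, (i < 5)%N -> (j < 5)%N ->
              e (x i) (x j) = (j == (i.+1 %% 5)%N) || (i == (j.+1 %% 5)%N)) ->
  (forall i, (i < 5)%N -> #|[set y | e (x i) y]| = 3) ->
  (forall j zj zj1, (j < 5)%N ->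
             e (x j) zj -> (forall i, (i < 5)%N -> zj != x i) ->
             e (x (j.+1 %% 5)%N) zj1 -> (forall i, (i < 5)%N -> zj1 != x i) ->
             zj != zj1 -> link_out e 5 x zj zj1) -> False.
Proof.
move=> sym irr crit V7 nW5 Hinj Hind Hdeg Hlink.
have V8 : #|V| <= 8 by apply: leq_trans V7 _.
have D : forall i j, (i < 5)%N -> (j < 5)%N -> i != j -> x i != x j.
  by move=> i j Hi Hj; apply: contra_neq => /(Hinj i j Hi Hj).
have ux : uniq [:: x 0; x 1; x 2; x 3; x 4].
  by rewrite /= !inE !negb_or !D.
have E : forall i j, (i < 5)%N -> (j < 5)%N -> e (x i) (x j) = (j == (i.+1 %% 5)%N) || (i == (j.+1 %% 5)%N) := Hind.
have [z0 [z0a z0b ez0 N0]] := nbr3 (Hdeg 0 isT) (E 0 1 isT isT) (E 0 4 isT isT) (D 1 4 isT isT isT).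
have [z1 [z1a z1b ez1 N1]] := nbr3 (Hdeg 1 isT) (E 1 2 isT isT) (E 1 0 isT isT) (D 2 0 isT isT isT).
have [z2 [z2a z2b ez2 N2]] := nbr3 (Hdeg 2 isT) (E 2 3 isT isT) (E 2 1 isT isT) (D 3 1 isT isT isT).
have [z3 [z3a z3b ez3 N3]] := nbr3 (Hdeg 3 isT) (E 3 4 isT isT) (E 3 2 isT isT) (D 4 2 isT isT isT).
have [z4 [z4a z4b ez4 N4]] := nbr3 (Hdeg 4 isT) (E 4 0 isT isT) (E 4 3 isT isT) (D 0 3 isT isT isT).
have zC : forall j z, (j < 5)%N -> e (x j) z -> z != x (j.+1 %% 5) -> z != x ((j + 4) %% 5) ->
   forall i, (i < 5)%N -> z != x i.
  move=> j z Hj ez za zb i Hi.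
  have [->|ij] := eqVneq i (j.+1 %% 5); first exact: za.
  have [->|ij'] := eqVneq i ((j + 4) %% 5); first exact: zb.
  apply: contraTneq ez => ->.
  rewrite Hind //; clear za zb; move: Hj Hi ij ij'.
  by case: j => [|[|[|[|[|j]]]]] //; case: i => [|[|[|[|[|i]]]]].
have z0C := zC 0 z0 isT ez0 z0a z0b.
have z1C := zC 1 z1 isT ez1 z1a z1b.
have z2C := zC 2 z2 isT ez2 z2a z2b.
have z3C := zC 3 z3 isT ez3 z3a z3b.
have z4C := zC 4 z4 isT ez4 z4a z4b.
have [z01|/negPn/eqP z01] := boolP (z0 != z1).
  exact: (link_big V8 ux z01 (Hlink 0 z0 z1 isT ez0 z0C ez1 z1C z01)).
have [z12|/negPn/eqP z12] := boolP (z1 != z2).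
  exact: (link_big V8 ux z12 (Hlink 1 z1 z2 isT ez1 z1C ez2 z2C z12)).
have [z23|/negPn/eqP z23] := boolP (z2 != z3).
  exact: (link_big V8 ux z23 (Hlink 2 z2 z3 isT ez2 z2C ez3 z3C z23)).
have [z34|/negPn/eqP z34] := boolP (z3 != z4).
  exact: (link_big V8 ux z34 (Hlink 3 z3 z4 isT ez3 z3C ez4 z4C z34)).
subst z1 z2 z3 z4.
have u6 : uniq [:: z0; x 0; x 1; x 2; x 3; x 4].
  rewrite cons_uniq ux andbT !inE !negb_or.
  by rewrite (z0C 0 isT) (z0C 1 isT) (z0C 2 isT) (z0C 3 isT) (z0C 4 isT).
have ezx : forall i, (i < 5)%N -> e z0 (x i).
  by case=> [|[|[|[|[|i]]]]] // _; rewrite sym.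
have ex : forall i j, (i < 5)%N -> (j < 5)%N -> j = (i.+1 %% 5) -> e (x i) (x j).
  by move=> i j Hi Hj ->; rewrite Hind ?eqxx // ltn_mod.
case: (pickP (fun y => y \notin [:: z0; x 0; x 1; x 2; x 3; x 4])) => [y yn | Hall].
  apply: (@W5_sub V e z0 (x 0) (x 1) (x 2) (x 3) (x 4)) => //;
    try (apply: ezx => //); try (apply: ex => //).
  apply/negP => /eqP H; move: (in_setT y); rewrite -H !inE.
  rewrite -!orbA; by move: yn; rewrite !inE => /negbTE ->.
apply: nW5; apply: (@W5_iso V e (x 0) (x 1) (x 2) (x 3) (x 4) z0) => //;
  try (apply: ezx => //); try (apply: ex => //); try (by rewrite Hind).
- apply: (@card_le_all _ [:: z0; x 0; x 1; x 2; x 3; x 4]) => y.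
  by move: (Hall y) => /negbT; rewrite negbK.
- by rewrite -(rot_uniq 1) in u6.
Qed.

Theorem lemma3p7 (V : finType) (e : rel V) :
  symmetric e -> irreflexive e -> Hprime e ->
  ~ giso K4 e -> ~ giso W5 e -> ~ giso M7 e -> ~ giso J7 e ->
  (8 <= #|V|)%N.
Proof.
move=> sym0 irr0 HP nK4 nW5 nM7 nJ7.
rewrite leqNgt; apply/negP => V7.
case: V e / HP sym0 irr0 nK4 nW5 nM7 nJ7 V7 => V e.
- move=> [|[|[|]]] // H _ _ nK4 nW5 nM7 nJ7 V7.
  by move: V7; rewrite (giso_card H).
- move=> sym irr crit [k [x [Hk Hinj Hind Hdeg Hlink]]] _ _ nK4 nW5 nM7 nJ7 V7.
  case: Hk => Hk; subst k.
  + exact: (case3 sym irr crit V7 nK4 nM7 Hinj Hind Hdeg Hlink).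
  + exact: (case5 sym irr crit V7 nW5 Hinj Hind Hdeg Hlink).
Qed.
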